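(* Let $P$ be a finite poset and $R$ a consistent restriction function on $P$ such that each $R(p)$ is a nonempty interval of integers. Then on the set $\{(p,k):p\in P,\ k\in R(p)^*\}$, the defining relation $\lessdot$ of $\Gamma(P,R)$ holds between $(p_1,k_1)$ and $(p_2,k_2)$ if and only if either (1) $p_1=p_2$ and $k_1=k_2+1$, or (2) $p_1\lessdot p_2$ in $P$ and $k_1+1=k_2$. In particular, $\Gamma(P,R)$ is the poset on this set whose covering relations are exactly those given by (1) and (2).
   Context: A restriction function assigns to each $p\in P$ a nonempty finite $R(p)\subseteq\mathbb{Z}$; $R$ is consistent if for every cover $x\lessdot y$ in $P$, $\min R(x)<\min R(y)$ and $\max R(x)<\max R(y)$. $R(p)^*=R(p)\setminus\{\max R(p)\}$; $R(p)_{>k}$ (resp. $R(p)_{<k}$) is the smallest (resp. largest) element of $R(p)$ greater (resp. less) than $k$. $\Gamma(P,R)$ is the poset on $\{(p,k):p\in P,k\in R(p)^*\}$ whose order is the reflexive–transitive closure of the relation $(p_1,k_1)\lessdot(p_2,k_2)$ (its covering relations), which holds iff either (i) $p_1=p_2$ and $R(p_1)_{>k_2}=k_1$; or (ii) $p_1\lessdot p_2$ in $P$, $k_1=R(p_1)_{<k_2}$, $k_1\ne\max R(p_1)$, and there is no $k\in R(p_2)$ with $k>k_2$ and $R(p_1)_{<k}=k_1$. *)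

(* Defs.v *)
From HB Require Import structures.
From mathcomp Require Import all_boot all_order all_algebra.
From mathcomp Require Import finmap.
From Stdlib Require Import Relations.
Set Implicit Arguments. Unset Strict Implicit. Unset Printing Implicit Defensive.
Import Order.TTheory GRing.Theory Num.Theory.
Local Open Scope fset_scope.

Section Gamma.
Context {disp : Order.disp_t} {P : finPOrderType disp}.

Definition pcovers (x y : P) : Prop :=
  (x < y)%O /\ ~ (exists z : P, (x < z)%O /\ (z < y)%O).

Definition is_min (S : {fset int}) (m : int) : Prop :=
  m \in S /\ forall j, j \in S -> (m <= j)%R.
Definition is_max (S : {fset int}) (m : int) : Prop :=
  m \in S /\ forall j, j \in S -> (j <= m)%R.
Definition is_succ (S : {fset int}) (k m : int) : Prop :=
  m \in S /\ (k < m)%R /\ forall j, j \in S -> (k < j)%R -> (m <= j)%R.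
Definition is_pred (S : {fset int}) (k m : int) : Prop :=
  m \in S /\ (m < k)%R /\ forall j, j \in S -> (j < k)%R -> (j <= m)%R.

Definition nonempty_restr (R : P -> {fset int}) : Prop :=
  forall p, exists k, k \in R p.

Definition consistent (R : P -> {fset int}) : Prop :=
  forall x y, pcovers x y ->
    (forall a b, is_min (R x) a -> is_min (R y) b -> (a < b)%R) /\
    (forall a b, is_max (R x) a -> is_max (R y) b -> (a < b)%R).

Definition interval_restr (R : P -> {fset int}) : Prop :=
  forall p, exists a b : int, forall k, k \in R p <-> (a <= k <= b)%R.

(* (p,k) is an element of Γ(P,R): k ∈ R(p)^* = R(p) \ {max R(p)} *)
Definition gamma_vertex (R : P -> {fset int}) (v : P * int) : Prop :=
  v.2 \in R v.1 /\ ~ is_max (R v.1) v.2.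

Definition gamma_rel (R : P -> {fset int}) (v w : P * int) : Prop :=
  let (p1, k1) := v in let (p2, k2) := w in
  (p1 = p2 /\ is_succ (R p1) k2 k1) \/
  (pcovers p1 p2 /\ is_pred (R p1) k2 k1 /\ ~ is_max (R p1) k1 /\
   ~ (exists k, k \in R p2 /\ (k2 < k)%R /\ is_pred (R p1) k k1)).

Definition gamma_le (R : P -> {fset int}) : relation (P * int) :=
  clos_refl_trans (P * int)
    (fun v w => gamma_vertex R v /\ gamma_vertex R w /\ gamma_rel R v w).

Definition gamma_lt (R : P -> {fset int}) (v w : P * int) : Prop :=
  v <> w /\ gamma_le R v w.

Definition gamma_covers (R : P -> {fset int}) (v w : P * int) : Prop :=
  gamma_lt R v w /\
  ~ (exists u, gamma_vertex R u /\ gamma_lt R v u /\ gamma_lt R u w).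

End Gamma.

(* Main.v *)
Require Import Defs.
From HB Require Import structures.
From mathcomp Require Import all_boot all_order all_algebra.
From mathcomp Require Import finmap.
From mathcomp Require Import zify.
From Stdlib Require Import Relations.
Import Order.TTheory GRing.Theory Num.Theory.
Local Open Scope fset_scope.

Section Aux.
Local Close Scope fset_scope.
Context {disp : Order.disp_t} {P : finPOrderType disp}.

Lemma succ_in (R : P -> {fset int}) (hint : interval_restr R) p k :
  k \in R p -> ~ is_max (R p) k -> (k + 1)%R \in R p.
Proof.
move=> kin nm; have [a [b hab]] := hint p.
have := proj1 (hab k) kin => /andP[ak kb].
apply/hab; apply/andP; split; first lia.
case: (boolP (k == b)) => [/eqP kb'|nkb]; last lia.
exfalso; apply: nm; split=> // j /hab /andP[_ jb]; lia.
Qed.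

Definition Q (v w : P * int) (m s : nat) : Prop :=
  w.2 = (v.2 + m%:Z - s%:Z)%R /\ (m = 0 -> v.1 = w.1) /\
  (0 < m -> (v.1 < w.1)%O) /\
  (1 < m -> exists z, (v.1 < z)%O /\ (z < w.1)%O) /\
  (m + s = 0 -> v = w).

Lemma Q_le v w m s : Q v w m s -> (v.1 <= w.1)%O.
Proof.
move=> [_ [h0 [h1 _]]]; case: m h0 h1 => [|m] h0 h1.
  by rewrite h0.
exact: ltW (h1 isT).
Qed.

Lemma Q_trans u v w m1 s1 m2 s2 : Q u v m1 s1 -> Q v w m2 s2 ->
  Q u w (m1 + m2) (s1 + s2).
Proof.
move=> H1 H2; have l1 := Q_le _ _ _ _ H1; have l2 := Q_le _ _ _ _ H2.
move: H1 H2 => [k1 [a1 [b1 [c1 d1]]]] [k2 [a2 [b2 [c2 d2]]]].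
split; first by rewrite k2 k1; lia.
split; first by move=> h; rewrite a1 ?a2 //; lia.
split.
  move=> h; case: (posnP m1) => [z1|p1].
    by rewrite a1 //; apply: b2; lia.
  exact: lt_le_trans (b1 p1) l2.
split.
  move=> h.
  case: (ltnP 1 m1) => [g1|g1].
    have [z [z1 z2]] := c1 g1; exists z; split=> //; exact: lt_le_trans z2 l2.
  case: (ltnP 1 m2) => [g2|g2].
    have [z [z1 z2]] := c2 g2; exists z; split=> //; exact: le_lt_trans l1 z1.
  exists v.1; split; [apply: b1|apply: b2]; lia.
move=> h; rewrite d1 ?d2 //; lia.
Qed.

End Aux.

Theorem theorem2p21 (disp : Order.disp_t) (P : finPOrderType disp)
    (R : P -> {fset int})
    (hne : nonempty_restr R) (hcons : consistent R) (hint : interval_restr R) :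
  forall p1 k1 p2 k2,
    gamma_vertex R (p1, k1) -> gamma_vertex R (p2, k2) ->
    (gamma_rel R (p1, k1) (p2, k2) <->
       (p1 = p2 /\ k1 = (k2 + 1)%R) \/ (pcovers p1 p2 /\ (k1 + 1)%R = k2)) /\
    (gamma_covers R (p1, k1) (p2, k2) <->
       (p1 = p2 /\ k1 = (k2 + 1)%R) \/ (pcovers p1 p2 /\ (k1 + 1)%R = k2)).
Proof.
Local Close Scope fset_scope.
have part1 : forall p1 k1 p2 k2,
    gamma_vertex R (p1, k1) -> gamma_vertex R (p2, k2) ->
    (gamma_rel R (p1, k1) (p2, k2) <->
       (p1 = p2 /\ k1 = (k2 + 1)%R) \/ (pcovers p1 p2 /\ (k1 + 1)%R = k2)).
  move=> p1 k1 p2 k2 [v1 m1] [v2 m2] /=; split.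
    case=> [[e [s1 [s2 s3]]]|[pc [[q1 [q2 q3]] [_ _]]]].
      subst p2; left; split=> //.
      have := s3 _ (succ_in _ hint _ _ v2 m2) => /=; lia.
    right; split=> //.
    have := succ_in _ hint _ _ v1 m1 => h.
    case: (boolP ((k1 + 1)%R < k2)%R) => [lt|]; last lia.
    have := q3 _ h lt => /=; lia.
  case=> [[e ek]|[pc ek]].
    subst p2 k1; left; split=> //; split=> //; split; first lia.
    move=> j _; lia.
  right; split=> //; split.
    split=> //; split; first lia; move=> j _; lia.
  split=> //; move=> [k [kin [kk [_ [_ q3]]]]].
  have := q3 _ (succ_in _ hint _ _ v1 m1) => /=; lia.
pose step := (fun v w : P * int => gamma_vertex R v /\ gamma_vertex R w /\ gamma_rel R v w).
have stepE : forall v w, step v w -> gamma_vertex R v /\ gamma_vertex R w /\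
   ((v.1 = w.1 /\ v.2 = (w.2 + 1)%R) \/ (pcovers v.1 w.1 /\ (v.2 + 1)%R = w.2)).
  move=> [a b] [c d] [va [vb r]]; do 2!split=> //; exact/(part1 _ _ _ _ va vb).
have leQ : forall v w, gamma_le R v w -> exists m s, Q v w m s.
  move=> v w; elim=> {v w}.
  - move=> v w /stepE [_ [_ [[e1 e2]|[[pc _] e2]]]].
      exists 0%N, 1%N; rewrite /Q e2; do !split=> //; try lia.
    exists 1%N, 0%N; rewrite /Q -e2; do !split=> //; try lia.
  - move=> v; exists 0%N, 0%N; rewrite /Q; do !split=> //; lia.
  - move=> u v w _ [m1 [s1 h1]] _ [m2 [s2 h2]].
    by exists (m1 + m2)%N, (s1 + s2)%N; apply: Q_trans _ _ _ _ _ _ _ h1 h2.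
move=> p1 k1 p2 k2 vv ww; split; first exact: part1.
split.
  move=> [[ne le] nou].
  have [e|[u [su lu]]] : (p1, k1) = (p2, k2) \/ exists u, step (p1, k1) u /\ gamma_le R u (p2, k2).
      case: (clos_rt_rt1n _ _ _ _ le) => [|y z s l]; first by left.
      by right; exists y; split=> //; apply: clos_rt1n_rt.
    by [].
  have [e|ne2] := eqVneq u (p2, k2).
    subst u; case: su => [_ [_ r]]; exact/(part1 _ _ _ _ vv ww).
  exfalso; apply: nou; exists u; split; first by case: su => [_ []].
  have [_ [_ uu]] := stepE _ _ su.
  split; split=> //; last exact/eqP.
    move=> e; subst u; case: uu => /= [[_]|[[]]]; [lia|by rewrite ltxx].
  exact: rt_step.
move=> h; split.
  split.
    move=> [e1 e2]; subst p2 k2; case: h => [[_]|[[]]]; [lia|by rewrite ltxx].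
  apply: rt_step; do 2!split=> //; exact/(part1 _ _ _ _ vv ww).
move=> [u [vu [[n1 l1] [n2 l2]]]].
have [m1 [s1 q1]] := leQ _ _ l1; have [m2 [s2 q2]] := leQ _ _ l2.
have q := Q_trans _ _ _ _ _ _ _ q1 q2.
move: q => [qk [qa [qb [qc qd]]]] /=.
move: q1 q2 => [_ [_ [_ [_ d1]]]] [_ [_ [_ [_ d2]]]].
case: h => [[e ek]|[[pc nz] ek]].
  subst p2 k1.
  have m0 : (m1 + m2 = 0)%N.
    case: (posnP (m1 + m2)) => // g; have := qb g; by rewrite ltxx.
  have : (s1 + s2 = 1)%N by move: qk => /=; lia.
  move=> hs; case: (posnP s1) => h1.
    by apply: n1; apply: d1; lia.
  by apply: n2; apply: d2; lia.
have mg : (0 < m1 + m2)%N.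
  case: (posnP (m1 + m2)) => // g; have := qa g => /= e; subst p2.
  by move: pc; rewrite ltxx.
have m1e : (m1 + m2 = 1)%N.
  case: (ltnP 1 (m1 + m2)) => g; last lia.
  by have [z [z1 z2]] := qc g; case: nz; exists z.
have : (s1 + s2 = 0)%N by move: qk => /=; lia.
move=> hs; case: (posnP m1) => h1.
  by apply: n1; apply: d1; lia.
by apply: n2; apply: d2; lia.
Qed.
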